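(* Let $(f,g)$ be a $t$-alternating pair of polynomials in $\mathbb N\{x_1,\dots,x_m\}$ ($m\ge t$). Then $(f,g)$ is a polynomial identity of every semiring$^\dagger$ $R$ which is spanned by fewer than $t$ elements over its center.
   Context: A semiring$^\dagger$ $(R,+,\cdot,1)$ is a set with binary operations such that $(R,+)$ is an abelian semigroup, $(R,\cdot,1)$ is a monoid, and multiplication distributes over addition (no zero required). Its center is the set of elements commuting multiplicatively with all of $R$. $R$ is spanned by $b_1,\dots,b_k$ over its center if every element of $R$ is a finite sum of elements $cb_i$ with $c$ central. $\mathbb N\{x_1,\dots,x_m\}$ is the monoid semiring over $\mathbb N$ of the free word monoid on noncommuting indeterminates. A pair $(f,g)$ is a polynomial identity of $R$ if $f(r_1,\dots,r_m)=g(r_1,\dots,r_m)$ for all $r_i\in R$. Polynomials $f,g$, each linear in each of $x_1,\dots,x_t$ (every monomial contains each of $x_1,\dots,x_t$ exactly once), form a $t$-alternating pair if, whenever $x_i$ and $x_j$ are interchanged for some $1\le i<j\le t$, $f$ becomes $g$ and $g$ becomes $f$. *)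

(* Defs.v *)
From Stdlib Require List.
From mathcomp Require Import all_boot.
From mathcomp Require Import fingroup perm.
Set Implicit Arguments. Unset Strict Implicit. Unset Printing Implicit Defensive.

Record semiring_dag := SemiringDag {
  sr_carrier :> Type;
  sr_add : sr_carrier -> sr_carrier -> sr_carrier;
  sr_mul : sr_carrier -> sr_carrier -> sr_carrier;
  sr_one : sr_carrier;
  sr_addA : forall x y z, sr_add x (sr_add y z) = sr_add (sr_add x y) z;
  sr_addC : forall x y, sr_add x y = sr_add y x;
  sr_mulA : forall x y z, sr_mul x (sr_mul y z) = sr_mul (sr_mul x y) z;
  sr_mul1l : forall x, sr_mul sr_one x = x;
  sr_mulr1 : forall x, sr_mul x sr_one = x;
  sr_mulDl : forall x y z, sr_mul (sr_add x y) z = sr_add (sr_mul x z) (sr_mul y z);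
  sr_mulDr : forall x y z, sr_mul x (sr_add y z) = sr_add (sr_mul x y) (sr_mul x z)
}.

Section SemiringDefs.
Variable R : semiring_dag.

(* Nonempty finite sums; the empty sum is undefined (None), since R need not
   have a zero. *)
Definition sum_ne (l : seq R) : option R :=
  match l with
  | [::] => None
  | x :: l' => Some (foldl (@sr_add R) x l')
  end.

Definition central (c : R) : Prop := forall r : R, sr_mul c r = sr_mul r c.

Definition spanned_over_center (k : nat) (b : 'I_k -> R) : Prop :=
  forall r : R, exists l : seq (R * 'I_k),
    (forall p, List.In p l -> central p.1) /\
    sum_ne [seq sr_mul p.1 (b p.2) | p <- l] = Some r.
End SemiringDefs.

(* N{x_1,...,x_m}: a polynomial is a finite N-linear combination of words in
   the noncommuting letters x_1..x_m (letters indexed by 'I_m, x_{i+1} <-> i),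
   represented as a list of monomials listed with multiplicity; two lists
   denote the same polynomial iff they are permutations of each other. *)
Definition word (m : nat) := seq 'I_m.
Definition npoly (m : nat) := seq (word m).

Definition eval_word (R : semiring_dag) (m : nat) (r : 'I_m -> R) (w : word m) : R :=
  foldr (fun i acc => sr_mul (r i) acc) (sr_one R) w.

(* Evaluation of a polynomial; the zero polynomial evaluates to None. *)
Definition eval_poly (R : semiring_dag) (m : nat) (r : 'I_m -> R) (f : npoly m)
  : option R := sum_ne [seq eval_word r w | w <- f].

Definition is_PI (R : semiring_dag) (m : nat) (f g : npoly m) : Prop :=
  forall r : 'I_m -> R, eval_poly r f = eval_poly r g.

Definition linear_in (m t : nat) (f : npoly m) : Prop :=
  forall w, w \in f -> forall i : 'I_m, i < t -> count_mem i w = 1.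

Definition swap_vars (m : nat) (i j : 'I_m) (f : npoly m) : npoly m :=
  [seq [seq tperm i j a | a <- w] | w <- f].

Definition t_alternating (m t : nat) (f g : npoly m) : Prop :=
  linear_in t f /\ linear_in t g /\
  forall i j : 'I_m, i < j -> j < t ->
    perm_eq (swap_vars i j f) g /\ perm_eq (swap_vars i j g) f.

(* Main.v *)
Require Import Defs.
From mathcomp Require Import all_boot.
From mathcomp Require Import fingroup perm.
From Stdlib Require Import ClassicalEpsilon.
Set Implicit Arguments. Unset Strict Implicit.

Section Aux.
Variable R : semiring_dag.
Local Notation add := (@sr_add R).
Local Notation mul := (@sr_mul R).

Definition oadd (a b : option R) : option R :=
  match a, b with
  | Some x, Some y => Some (add x y)
  | Some x, None => Some x
  | None, _ => b end.

Lemma oaddC a b : oadd a b = oadd b a.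
Proof. by case: a => [x|]; case: b => [y|] //=; rewrite sr_addC. Qed.
Lemma oaddA a b c : oadd a (oadd b c) = oadd (oadd a b) c.
Proof. by case: a => [x|]; case: b => [y|]; case: c => [z|] //=; rewrite sr_addA. Qed.

Lemma oaddACA a b c d : oadd (oadd a b) (oadd c d) = oadd (oadd a c) (oadd b d).
Proof. by rewrite -!oaddA [oadd b (oadd c d)]oaddA [oadd b c]oaddC -oaddA. Qed.

Definition osum (l : seq R) := foldr (fun x acc => oadd (Some x) acc) None l.

Lemma osum_cons x l : osum (x :: l) = oadd (Some x) (osum l).
Proof. by []. Qed.

Lemma sum_ne_osum l : sum_ne l = osum l.
Proof.
case: l => [|x l] //.
rewrite osum_cons /=.
elim: l x => [|y l IH] x //=.
rewrite IH; case: (osum l) => [z|] //; by rewrite sr_addA.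
Qed.

Lemma eval_polyE m r (f : npoly m) : eval_poly r f = osum [seq eval_word r w | w <- f].
Proof. exact: sum_ne_osum. Qed.

Lemma eval_word_cons m (r : 'I_m -> R) a w :
  eval_word r (a :: w) = mul (r a) (eval_word r w).
Proof. by []. Qed.

Definition upd m (r : 'I_m -> R) (s : 'I_m) (x : R) := fun i => if i == s then x else r i.

Lemma eval_word_upd0 m r s x y (w : word m) : count_mem s w = 0 ->
  eval_word (upd r s x) w = eval_word (upd r s y) w.
Proof.
elim: w => [|a w IH] // h.
rewrite !eval_word_cons.
case: (eqVneq a s) h => [->|ne]; first by rewrite /= eqxx.
rewrite /= (negbTE ne) add0n => h.
by rewrite IH // /upd (negbTE ne).
Qed.

Lemma eval_word_lin m r s x y (w : word m) : count_mem s w = 1 ->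
  eval_word (upd r s (add x y)) w =
  add (eval_word (upd r s x) w) (eval_word (upd r s y) w).
Proof.
elim: w => [|a w IH] // h.
rewrite !eval_word_cons.
case: (eqVneq a s) h => [->|ne].
  rewrite /= eqxx /= => /eqP; rewrite eqSS => /eqP h.
  rewrite /upd eqxx sr_mulDl.
  by rewrite (eval_word_upd0 r x (add x y) h) (eval_word_upd0 r y (add x y) h).
rewrite /= (negbTE ne) add0n => h.
by rewrite IH // /upd (negbTE ne) sr_mulDr.
Qed.

Lemma eval_word_scale m r s c x (w : word m) : central c -> count_mem s w = 1 ->
  eval_word (upd r s (mul c x)) w = mul c (eval_word (upd r s x) w).
Proof.
move=> cc.
elim: w => [|a w IH] // h.
rewrite !eval_word_cons.
case: (eqVneq a s) h => [->|ne].
  rewrite /= eqxx /= => /eqP; rewrite eqSS => /eqP h.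
  rewrite /upd eqxx -sr_mulA.
  by rewrite (eval_word_upd0 r x (mul c x) h).
rewrite /= (negbTE ne) add0n => h.
rewrite IH // /upd (negbTE ne) !sr_mulA.
by rewrite cc.
Qed.

Lemma eval_poly_lin m r s x y (f : npoly m) :
  (forall w, w \in f -> count_mem s w = 1) ->
  eval_poly (upd r s (add x y)) f =
  oadd (eval_poly (upd r s x) f) (eval_poly (upd r s y) f).
Proof.
rewrite !eval_polyE.
elim: f => [|w f IH] h //.
rewrite !map_cons !osum_cons IH; last by move=> v hv; apply: h; rewrite inE hv orbT.
rewrite eval_word_lin; last by apply: h; rewrite inE eqxx.
rewrite -oaddACA //.
Qed.

Lemma eval_poly_scale m r s c x (f : npoly m) : central c ->
  (forall w, w \in f -> count_mem s w = 1) ->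
  eval_poly (upd r s (mul c x)) f = omap (mul c) (eval_poly (upd r s x) f).
Proof.
move=> cc; rewrite !eval_polyE.
elim: f => [|w f IH] h //.
rewrite !map_cons !osum_cons IH; last by move=> v hv; apply: h; rewrite inE hv orbT.
rewrite eval_word_scale //; last by apply: h; rewrite inE eqxx.
by case: (osum _) => [z|] //=; rewrite sr_mulDr.
Qed.

Lemma osum_rem m (h : word m -> R) (s : npoly m) x : x \in s ->
  osum (map h s) = oadd (Some (h x)) (osum (map h (rem x s))).
Proof.
elim: s => [|y s IH] //.
rewrite inE; case: (eqVneq x y) => [<-|ne] hx.
  by rewrite map_cons osum_cons; congr oadd; rewrite /= eqxx.
have -> : rem x (y :: s) = y :: rem x s by rewrite /= eq_sym (negbTE ne).
by rewrite !map_cons !osum_cons IH // !oaddA [oadd (Some (h y)) _]oaddC.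
Qed.

Lemma osum_perm m (h : word m -> R) (s1 s2 : npoly m) : perm_eq s1 s2 ->
  osum (map h s1) = osum (map h s2).
Proof.
elim: s1 s2 => [|x s1 IH] s2 hp.
  by move: hp; rewrite perm_sym => /perm_nilP ->.
have hx : x \in s2 by rewrite -(perm_mem hp) inE eqxx.
rewrite (osum_rem h hx) map_cons osum_cons (IH (rem x s2)) //.
by rewrite -(perm_cons x) (perm_trans hp) // perm_to_rem.
Qed.

Lemma eval_poly_ext m (r r' : 'I_m -> R) f : r =1 r' -> eval_poly r f = eval_poly r' f.
Proof.
move=> e; rewrite !eval_polyE; congr osum; apply: eq_map => w.
elim: w => [|a w IH] //; by rewrite !eval_word_cons IH e.
Qed.

Lemma eval_poly_swap m (r : 'I_m -> R) i j f :
  eval_poly r (swap_vars i j f) = eval_poly (fun a => r (tperm i j a)) f.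
Proof.
rewrite !eval_polyE /swap_vars -map_comp; congr osum; apply: eq_map => w.
rewrite /comp.
elim: w => [|a w IH] //. by rewrite map_cons !eval_word_cons IH.
Qed.

End Aux.

Theorem proposition5p7 (m t : nat) (htm : t <= m) (f g : npoly m) :
  t_alternating t f g ->
  forall (R : semiring_dag) (k : nat) (b : 'I_k -> R),
    k < t -> spanned_over_center b -> is_PI R f g.
Proof.
move=> [linf [ling alt]] R k b hkt span.
suff P : forall n, n <= t -> forall r : 'I_m -> R,
    (forall i : 'I_m, n <= i -> i < t -> exists j, r i = b j) ->
    eval_poly r f = eval_poly r g.
  move=> r; apply: (P t) => // i h1 h2; exfalso; by rewrite leqNgt h2 in h1.
elim=> [|n IH] hn r hr.
  (* pigeonhole *)
  have hJ : forall i : 'I_t, exists j, r (widen_ord htm i) = b j.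
    by move=> i; apply: hr => //=.
  pose J := fun i : 'I_t => proj1_sig (constructive_indefinite_description _ (hJ i)).
  have HJ : forall i, r (widen_ord htm i) = b (J i).
    by move=> i; rewrite /J; case: constructive_indefinite_description.
  have : ~~ injectiveb J.
    apply/negP => /injectiveP inj.
    by have := @leq_card _ _ J inj; rewrite !card_ord leqNgt hkt.
  move=> /injectivePn [i1 [i2 ne eqJ]].
  wlog lt12 : i1 i2 ne eqJ / i1 < i2.
    move=> W; case: (ltngtP (val i1) (val i2)) => [l|l|e]; first exact: (W i1 i2 ne eqJ l).
      by apply: (W i2 i1) => //; rewrite eq_sym.
    by move: ne; rewrite -(inj_eq val_inj) e eqxx.
  set a1 := widen_ord htm i1; set a2 := widen_ord htm i2.
  have [_ hg] := alt a1 a2 lt12 (ltn_ord i2).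
  idtac.
  rewrite eval_polyE -(osum_perm _ hg) -eval_polyE eval_poly_swap.
  apply: eval_poly_ext => x.
  have er : r a1 = r a2 by rewrite HJ HJ eqJ.
  by case: tpermP => [->|->|].
have ns : n < m by apply: leq_trans htm.
pose s := Ordinal ns.
have lin1 : forall h : npoly m, linear_in t h -> forall w, w \in h -> count_mem s w = 1.
  by move=> h lh w hw; apply: lh.
pose Q := fun x => eval_poly (upd r s x) f = eval_poly (upd r s x) g.
have Qadd : forall x y, Q x -> Q y -> Q (sr_add x y).
  move=> x y qx qy; rewrite /Q !eval_poly_lin; try exact: lin1.
  by rewrite qx qy.
have Qb : forall c j, central c -> Q (sr_mul c (b j)).
  move=> c j cc; rewrite /Q !eval_poly_scale //; try exact: lin1.
  congr omap; apply: IH; first exact: ltnW.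
  move=> i h1 h2; rewrite /upd; case: (eqVneq i s) => [_|nei]; first by exists j.
  apply: hr => //; rewrite ltn_neqAle h1 andbT.
  by apply: contra nei => /eqP e; apply/eqP; apply: val_inj.
have -> : eval_poly r f = eval_poly (upd r s (r s)) f.
  by apply: eval_poly_ext => i; rewrite /upd; case: eqP => [->|].
have -> : eval_poly r g = eval_poly (upd r s (r s)) g.
  by apply: eval_poly_ext => i; rewrite /upd; case: eqP => [->|].
have [l [hc hs]] := span (r s).
case: l hc hs => [|p l] //= hc [<-].
have : Q (sr_mul p.1 (b p.2)) by apply: Qb; apply: hc; left.
have hc' : forall q, List.In q l -> central q.1 by move=> q hq; apply: hc; right.
elim: l {hc} hc' (sr_mul p.1 (b p.2)) => [|q l IHl] //= hc' x qx.
apply: IHl; first by move=> q' hq'; apply: hc'; right.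
by apply: Qadd => //; apply: Qb; apply: hc'; left.
Qed.
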